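(* Let $A$ be a finite set, $n\ge3$, $\rho\subseteq A^n$ with $1\overset{\rho}{\sim}2$, and let $(a_1,\dots,a_n)\in A^n\setminus\rho$ and $b_1,\dots,b_n\in A$ with $b_i\neq a_i$ for all $i$, such that $$(\{a_1,b_1\}\times\dots\times\{a_n,b_n\})\setminus\{(a_1,a_2,a_3,\dots,a_n),(b_1,b_2,a_3,\dots,a_n)\}\subseteq\rho.$$ Then $\rho$ is a key relation and $(a_1,\dots,a_n)$ is a key tuple for $\rho$.
   Context: A unary vector-function is a tuple $\Psi=(\psi_1,\dots,\psi_n)$ of maps $\psi_i:A\to A$ acting coordinatewise; it preserves $\rho$ if $\Psi(\rho)\subseteq\rho$. $\rho\subseteq A^n$ is a key relation if there is $\beta\in A^n\setminus\rho$ (a key tuple) such that every $\alpha\in A^n\setminus\rho$ is mapped to $\beta$ by some unary vector-function preserving $\rho$. The relation $\overset{\rho}{\sim}$: for $i\ne j$, $i\overset{\rho}{\sim}j$ iff there do NOT exist $c_1,\dots,c_n,d_i,d_j\in A$ with $(c_1,\dots,c_n)\notin\rho$ while the tuples obtained by replacing $c_i$ by $d_i$, replacing $c_j$ by $d_j$, and replacing both, all lie in $\rho$. *)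

(* Defs.v *)
(* Tuples in A^n are finite functions 'I_n -> A (0-based indices). *)
From mathcomp Require Import all_boot.
Set Implicit Arguments. Unset Strict Implicit. Unset Printing Implicit Defensive.

Section KeyDefs.
Variables (A : finType) (n : nat).
Notation tup := {ffun 'I_n -> A}.

Definition vapply (Psi : 'I_n -> A -> A) (x : tup) : tup :=
  [ffun i => Psi i (x i)].

Definition preserves (Psi : 'I_n -> A -> A) (rho : {set tup}) : Prop :=
  forall x, x \in rho -> vapply Psi x \in rho.

Definition is_key_tuple (rho : {set tup}) (beta : tup) : Prop :=
  beta \notin rho /\
  forall alpha, alpha \notin rho ->
    exists Psi : 'I_n -> A -> A, preserves Psi rho /\ vapply Psi alpha = beta.

Definition is_key_relation (rho : {set tup}) : Prop :=
  exists beta, is_key_tuple rho beta.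

Definition upd (x : tup) (i : 'I_n) (d : A) : tup :=
  [ffun k => if k == i then d else x k].

Definition rho_sim (rho : {set tup}) (i j : 'I_n) : Prop :=
  i != j /\
  ~ (exists (c : tup) (di dj : A),
        c \notin rho /\ upd c i di \in rho /\ upd c j dj \in rho /\
        upd (upd c i di) j dj \in rho).
End KeyDefs.

(* Main.v *)
Require Import Defs.
From mathcomp Require Import all_boot.

(* Indices are 0-based: paper's coordinates 1,2 are i1, i2 with val 0, 1. *)
Theorem mainTheorem8 (A : finType) (n : nat) (hn : 3 <= n)
  (rho : {set {ffun 'I_n -> A}}) (i1 i2 : 'I_n)
  (hi1 : nat_of_ord i1 = 0) (hi2 : nat_of_ord i2 = 1)
  (hsim : rho_sim rho i1 i2)
  (a b : {ffun 'I_n -> A}) (ha : a \notin rho)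
  (hab : forall i, b i != a i)
  (hbox : forall x : {ffun 'I_n -> A},
      (forall i, x i = a i \/ x i = b i) ->
      x <> a ->
      x <> [ffun i => if (nat_of_ord i < 2) then b i else a i] ->
      x \in rho) :
  is_key_relation rho /\ is_key_tuple rho a.
Proof.
have Hkey : is_key_tuple rho a.
  split => // al Hal.
  have n12 : i1 != i2 by apply/eqP => E; move: hi1; rewrite E hi2.
  pose g u v : {ffun 'I_n -> A} :=
    [ffun k => if k == i1 then u else if k == i2 then v else al k].
  pose R u v := g u v \in rho.
  have gal : g (al i1) (al i2) = al.
    apply/ffunP => k; rewrite ffunE.
    by case: eqP => [->|_] //; case: eqP => [->|].
  have Rsim : forall c1 c2 d1 d2, R d1 c2 -> R c1 d2 -> R d1 d2 -> R c1 c2.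
    move=> c1 c2 d1 d2 H1 H2 H3; apply/negPn/negP => H0.
    apply: hsim.2; exists (g c1 c2), d1, d2.
    have n21 : i2 != i1 by rewrite eq_sym.
    have E1 : upd (g c1 c2) i1 d1 = g d1 c2.
      apply/ffunP => k; rewrite !ffunE.
      case: (eqVneq k i1) => [_|h1] //.
    have E2 : upd (g c1 c2) i2 d2 = g c1 d2.
      apply/ffunP => k; rewrite !ffunE.
      case: (eqVneq k i2) => [Ek|h2]; first by rewrite ?Ek ?(negbTE n21).
      by [].
    have E3 : upd (upd (g c1 c2) i1 d1) i2 d2 = g d1 d2.
      apply/ffunP => k; rewrite !ffunE.
      case: (eqVneq k i2) => [Ek|h2]; first by rewrite ?Ek ?(negbTE n21).
      by case: (eqVneq k i1).
    by rewrite E3 E1 E2.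
  have Rn : ~~ R (al i1) (al i2) by rewrite /R gal.
  pose Psi (k : 'I_n) (d : A) :=
    if k == i1 then (if R d (al i2) then b k else a k)
    else if k == i2 then (if [exists u, R u d && ~~ R u (al i2)] then b k else a k)
    else (if d == al k then a k else b k).
  exists Psi; split; last first.
    apply/ffunP => k; rewrite ffunE /Psi.
    case: eqP => [->|_]; first by rewrite (negbTE Rn).
    case: eqP => [->|_]; last by rewrite eqxx.
    by case: existsP => // -[u /andP[/[swap] /negP]].
  move=> x Hx.
  have other : forall k, k != i1 -> k != i2 -> Psi k (x k) = a k -> x k = al k.
    move=> k /negbTE h1 /negbTE h2; rewrite /Psi h1 h2.
    by case: eqP => // _ E; move: (hab k); rewrite E eqxx.
  have xg : (forall k, k != i1 -> k != i2 -> Psi k (x k) = a k) -> x = g (x i1) (x i2).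
    move=> H; apply/ffunP => k; rewrite ffunE.
    case: (eqVneq k i1) => [Ek|h1]; first by rewrite Ek.
    case: (eqVneq k i2) => [Ek|h2]; first by rewrite Ek.
    exact: other (H _ h1 h2).
  have atE : forall (f : {ffun 'I_n -> A}) k, vapply Psi x = f -> Psi k (x k) = f k.
    by move=> f k E; rewrite -E ffunE.
  apply: hbox.
  - move=> k; rewrite ffunE /Psi.
    by do 2 case: ifP => _; do ?case: ifP => _; auto.
  - move=> E.
    have Hg := xg (fun k _ _ => atE _ k E).
    have HR : R (x i1) (x i2) by rewrite /R -Hg.
    have := atE _ i1 E; rewrite /Psi eqxx.
    case: ifP => HR1; first by move/eqP; rewrite (negbTE (hab _)).
    move=> _.
    have := atE _ i2 E; rewrite /Psi eq_sym (negbTE n12) eqxx.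
    case: existsP => Hne; first by move/eqP; rewrite (negbTE (hab _)).
    move=> _.
    by apply: Hne; exists (x i1); rewrite HR HR1.
  - move=> E.
    have Hg : x = g (x i1) (x i2).
      apply: xg => k h1 h2; rewrite (atE _ k E) ffunE.
      have : 1 < k.
        by move: h1 h2; rewrite -!(inj_eq val_inj) /= hi1 hi2; case: (nat_of_ord k) => [|[]].
      by move=> h; rewrite ltnNge h.
    have HR : R (x i1) (x i2) by rewrite /R -Hg.
    have := atE _ i1 E; rewrite /Psi eqxx ffunE hi1 /=.
    case: ifP => HR1; last by move/eqP; rewrite eq_sym (negbTE (hab _)).
    move=> _.
    have := atE _ i2 E; rewrite /Psi eq_sym (negbTE n12) eqxx ffunE hi2 /=.
    case: existsP => [[u /andP[Hu /negP Hn]] _|_]; last by move/eqP; rewrite eq_sym (negbTE (hab _)).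
    by apply: Hn; apply: (Rsim _ _ (x i1) (x i2)).
by split => //; exists a.
Qed.
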